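(* Let $n,k,m,r$ be positive integers. Then \begin{align*} r\,S_{\leq m}(n,k,r)&=\sum_{j=1}^{\min(m,\,n+2-k-r)}\binom{n}{j}S_{\leq m}(n-j,k,r-1),\\ n\,S_{\leq m}(n,k,r)&=\sum_{j=1}^{\min(m,\,n+2-k-r)}j\binom{n}{j}\Big[S_{\leq m}(n-j,k,r-1)+(k-1)S_{\leq m}(n-j,k-1,r)\Big], \end{align*} where the term $(k-1)S_{\leq m}(n-j,k-1,r)$ is $0$ when $k=1$.
   Context: For integers $N\ge 0$, $k\ge1$, $r\ge 0$, $m\ge1$, $S_{\leq m}(N,k,r)$ is the number of ways to partition $[N]=\{1,\dots,N\}$ into $r+k-1$ non-empty blocks, each of size at most $m$, where $r$ of the blocks receive the label $1$ (blocks with label $1$ are indistinguishable among themselves) and the remaining $k-1$ blocks receive the distinct labels $2,3,\dots,k$. *)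

(* Defs.v *)
From mathcomp Require Import all_boot.
Unset Printing Implicit Defensive.

(* The ground set [N] = {1..N} is modelled by 'I_N.
   A labelled partition is a pair (P, L) where P is a set partition of 'I_N
   (a set of nonempty pairwise-disjoint blocks covering 'I_N) and
   L assigns to each block a label in 'I_k; the label with value 0 stands
   for the paper's label 1, and value i (0 < i < k) for label i+1.
   L is normalised to 0 outside P so that it is determined by its values
   on the blocks. *)
Definition labelled_partition (N k r m : nat)
  (PL : {set {set 'I_N}} * {ffun {set 'I_N} -> 'I_k}) : bool :=
  let P := PL.1 in let L := PL.2 in
  [&& partition P [set: 'I_N],
      [forall B in P, #|B| <= m],
      #|P| == r + k - 1,
      [forall B, (B \notin P) ==> (val (L B) == 0)],
      #|[set B in P | val (L B) == 0]| == r &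
      [forall i : 'I_k, (0 < val i) ==> (#|[set B in P | L B == i]| == 1)]].

Definition Sle (m N k r : nat) : nat :=
  #|[set PL | @labelled_partition N k r m PL]|.

(* Main.v *)
Require Import Defs.
From mathcomp Require Import all_boot zify.


Definition lp {T : finType} (m k r : nat) (A : {set T})
  (PL : {set {set T}} * {ffun {set T} -> 'I_k}) : bool :=
  let P := PL.1 in let L := PL.2 in
  [&& partition P A,
      [forall B in P, #|B| <= m],
      #|P| == r + k - 1,
      [forall B, (B \notin P) ==> (val (L B) == 0)],
      #|[set B in P | val (L B) == 0]| == r &
      [forall i : 'I_k, (0 < val i) ==> (#|[set B in P | L B == i]| == 1)]].

Definition G {T : finType} m k r (A : {set T}) := #|[set PL | lp m k r A PL]|.

Lemma SleE m N k r : Sle m N k r = G m k r [set: 'I_N].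
Proof. by []. Qed.

Lemma card_bij (T1 T2 : finType) (S1 : {set T1}) (S2 : {set T2}) (f : T1 -> T2) (g : T2 -> T1) :
  {in S1, forall x, f x \in S2} -> {in S2, forall y, g y \in S1} ->
  {in S1, cancel f g} -> {in S2, cancel g f} -> #|S1| = #|S2|.
Proof.
move=> fS gS fK gK; apply/eqP; rewrite eqn_leq; apply/andP; split.
- rewrite -(card_in_imset (f := f)); last by move=> x y xS yS e; rewrite -(fK x xS) e fK.
  apply: subset_leq_card; apply/subsetP => y /imsetP [x xS ->]; exact: fS.
- rewrite -(card_in_imset (f := g)); last by move=> x y xS yS e; rewrite -(gK x xS) e gK.
  apply: subset_leq_card; apply/subsetP => y /imsetP [x xS ->]; exact: gS.
Qed.

Section Transport.
Variables (T T' : finType) (f : T -> T') (finj : injective f) (m k r : nat) (A : {set T}).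

Lemma preimK (C : {set T}) : f @^-1: (f @: C) = C.
Proof. by apply/setP=> x; rewrite inE mem_imset. Qed.

Lemma imK (C' : {set T'}) (D : {set T}) : C' \subset f @: D -> f @: (f @^-1: C') = C'.
Proof.
move=> sub; apply/setP=> y; apply/imsetP/idP => [[x]|yC].
  by rewrite inE => ? ->.
have := subsetP sub y yC => /imsetP [x _ eq]; exists x => //; by rewrite inE -eq.
Qed.

Arguments imK {C' D}.

Definition phi (PL : {set {set T}} * {ffun {set T} -> 'I_k}) :
   {set {set T'}} * {ffun {set T'} -> 'I_k} :=
  ([set f @: (C : {set T}) | C in PL.1],
   [ffun C' => if C' \in [set f @: (C : {set T}) | C in PL.1] then PL.2 (f @^-1: C') else PL.2 set0]).

Definition psi (PL' : {set {set T'}} * {ffun {set T'} -> 'I_k}) :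
   {set {set T}} * {ffun {set T} -> 'I_k} :=
  ([set f @^-1: (C' : {set T'}) | C' in PL'.1], [ffun C : {set T} => PL'.2 (f @: C)]).

Let finj2 : injective (fun C : {set T} => f @: C) := imset_inj finj.

Lemma phi_sel (P : {set {set T}}) (L : {ffun {set T} -> 'I_k}) (q : pred 'I_k) :
  [set C' in [set f @: (C : {set T}) | C in P] | q ((phi (P, L)).2 C')]
  = [set f @: (C : {set T}) | C in [set C in P | q (L C)]].
Proof.
apply/setP => C'; rewrite inE ffunE /=; apply/andP/imsetP.
- case=> /imsetP [C CP ->]; rewrite (imset_f (fun C : {set T} => f @: C) CP) preimK => qC.
  by exists C => //; rewrite inE CP qC.
- case=> C; rewrite inE => /andP [CP qC] ->.
  by rewrite (imset_f (fun C : {set T} => f @: C) CP) preimK.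
Qed.

Lemma lp_phi (P : {set {set T}}) (L : {ffun {set T} -> 'I_k}) : [forall C, (C \notin P) ==> (val (L C) == 0)] ->
  lp m k r A (P, L) = lp m k r (f @: A) (phi (P, L)).
Proof.
move=> nL; rewrite /lp /= imset_partition //.
case pP: (partition P A) => //=.
have s0 : set0 \notin P by rewrite (partition0 pP).
have L0 : val (L set0) == 0 by exact: (implyP (forallP nL set0) s0).
rewrite nL (card_imset _ finj2).
have -> : [forall B in [set f @: (C : {set T}) | C in P], #|B| <= m] = [forall B in P, #|B| <= m].
  apply/forallP/forallP => H C; apply/implyP => CP.
  - by have := implyP (H (f @: C)) (imset_f _ CP); rewrite card_imset.
  - by case/imsetP: CP => C0 C0P ->; rewrite card_imset //; exact: (implyP (H C0) C0P).
have -> : [forall B, (B \notin [set f @: (C : {set T}) | C in P]) ==>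
     (val ([ffun C' => if C' \in [set f @: (C : {set T}) | C in P] then L (f @^-1: C') else L set0] B) == 0)].
  by apply/forallP => C'; apply/implyP; rewrite ffunE => /negbTE ->.
rewrite (phi_sel P L (fun i => val i == 0)) (card_imset _ finj2) /=.
do 3 (apply: andb_id2l => _).
apply/forallP/forallP => H i; apply/implyP => i0; have := implyP (H i) i0.
- by rewrite (phi_sel P L (fun j => j == i)) (card_imset _ finj2).
- by rewrite (phi_sel P L (fun j => j == i)) (card_imset _ finj2).
Qed.


Lemma phiK (P' : {set {set T'}}) (L' : {ffun {set T'} -> 'I_k}) :
  lp m k r (f @: A) (P', L') -> phi (psi (P', L')) = (P', L').
Proof.
case/and5P => /= pP _ _ nL _.
have EP : [set f @: (C : {set T}) | C in [set f @^-1: (C' : {set T'}) | C' in P']] = P'.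
  apply/setP => C'; apply/imsetP/idP.
  - by case=> C /imsetP [C'' C''P ->] ->; rewrite (imK (partitionS pP C''P)).
  - move=> C'P; exists (f @^-1: C'); first exact: imset_f.
    by rewrite (imK (partitionS pP C'P)).
rewrite /phi /psi /= EP; congr pair; apply/ffunP => C'; rewrite ffunE.
case: ifP => C'P; rewrite ffunE.
  by rewrite (imK (partitionS pP C'P)).
rewrite imset0; apply: val_inj.
have s0 : set0 \notin P' by rewrite (partition0 pP).
move: (implyP (forallP nL set0) s0) (implyP (forallP nL C') (negbT C'P)) => /eqP h1 /eqP h2.
exact: (etrans h1 (esym h2)).
Qed.

Lemma psiK (P : {set {set T}}) (L : {ffun {set T} -> 'I_k}) :
  lp m k r A (P, L) -> psi (phi (P, L)) = (P, L).
Proof.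
case/and5P => /= pP _ _ nL _.
rewrite /phi /psi /=; congr pair.
  rewrite -imset_comp; rewrite -[RHS]imset_id; apply: eq_imset => C /=; exact: preimK.
apply/ffunP => C; rewrite !ffunE.
case: ifP => CP.
  by rewrite preimK.
apply: val_inj.
have s0 : set0 \notin P by rewrite (partition0 pP).
have CnP : C \notin P.
  by apply: contraFN CP => CP'; exact: (imset_f (fun C : {set T} => f @: C) CP').
move: (implyP (forallP nL set0) s0) (implyP (forallP nL C) CnP) => /eqP h1 /eqP h2.
exact: (etrans h1 (esym h2)).
Qed.

Lemma G_transport : G m k r A = G m k r (f @: A).
Proof.
apply: (@card_bij _ _ _ _ phi psi).
- case=> P L; rewrite !inE => H; rewrite -lp_phi //; by case/and5P: H.
- case=> P' L'; rewrite !inE => H; rewrite lp_phi ?phiK //.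
  apply/forallP => C; apply/implyP => CnP; rewrite ffunE.
  case/and5P: H => _ _ _ nL _; apply: (implyP (forallP nL _)).
  apply: contra CnP => fCP; apply/imsetP; exists (f @: C) => //; by rewrite preimK.
- case=> P L; rewrite inE => H; exact: psiK.
- case=> P L; rewrite inE => H; exact: phiK.
Qed.

End Transport.

Section Removal.
Variables (T : finType) (m : nat) (A B : {set T}).
Hypotheses (B0 : B != set0) (sBA : B \subset A) (Bm : #|B| <= m).

Lemma partU (P' : {set {set T}}) : partition P' (A :\: B) -> partition (B |: P') A /\ B \notin P'.
Proof.
move=> pP; split.
  have -> : A = B :|: (A :\: B).
    apply/setP => x; rewrite !inE; case: (boolP (x \in B)) => xB //=.
    by rewrite (subsetP sBA x xB).
  apply: partitionU1 => //; rewrite disjoints_subset; apply/subsetP => x xB; by rewrite !inE xB.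
apply/negP => BP; have := partitionS pP BP; case/set0Pn: B0 => x xB /subsetP /(_ x xB).
by rewrite !inE xB.
Qed.

Lemma card_selU1 (P : {set {set T}}) (F G : {set T} -> bool) :
  B \notin P -> (forall C, C != B -> F C = G C) ->
  #|[set C in B |: P | F C]| = F B + #|[set C in P | G C]|.
Proof.
move=> BnP FG; case FB: (F B).
  have -> : [set C in B |: P | F C] = B |: [set C in P | G C].
    apply/setP => C; rewrite !inE; case: (eqVneq C B) => [->|CB] /=; first by rewrite FB.
    by rewrite (FG C CB).
  by rewrite cardsU1 inE (negbTE BnP).
have -> // : [set C in B |: P | F C] = [set C in P | G C].
apply/setP => C; rewrite !inE; case: (eqVneq C B) => [->|CB] /=.
  by rewrite FB (negbTE BnP).
by rewrite (FG C CB).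
Qed.

Lemma card_selD1 (P : {set {set T}}) (F G : {set T} -> bool) :
  B \in P -> (forall C, C != B -> F C = G C) ->
  #|[set C in P :\ B | F C]| = #|[set C in P | G C]| - G B.
Proof.
move=> BP FG; rewrite (cardsD1 B [set C in P | G C]) inE BP /=.
have -> : [set C in P :\ B | F C] = [set C in P | G C] :\ B.
  apply/setP => C; rewrite !inE; case: (eqVneq C B) => [->|CB] /=.
  done.
  by rewrite (FG C CB).
by rewrite addKn.
Qed.

Arguments card_selD1 {P F G}.
Arguments partU {P'}.
Arguments card_selU1 {P F G}.

Lemma rem0 (k' r' : nat) :
  #|[set PL | lp m k'.+1 r'.+1 A PL && (B \in PL.1) && (val (PL.2 B) == 0)]|
  = G m k'.+1 r' (A :\: B).
Proof.
pose f0 (PL : {set {set T}} * {ffun {set T} -> 'I_k'.+1}) :=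
  (PL.1 :\ B, [ffun C => if C == B then ord0 else PL.2 C]).
pose g0 (PL : {set {set T}} * {ffun {set T} -> 'I_k'.+1}) :=
  (B |: PL.1, [ffun C => if C == B then ord0 else PL.2 C]).
apply: (@card_bij _ _ _ _ f0 g0).
- case=> P L; rewrite !inE /= => /andP [/andP [H BP] LB].
  case/and5P: H => /= pP sz cP nL /andP [c0 ci].
  apply/and5P; split => /=.
  + exact: partitionD1.
  + apply/forallP => C; apply/implyP => /setD1P [_ CP]; exact: (implyP (forallP sz C) CP).
  + apply/eqnP; move: cP; rewrite (cardsD1 B P) BP /= => /eqnP cP.
    move: cP; set x := #|P :\ B|; move=> cP. lia.
  + apply/forallP => C; apply/implyP => CnP; rewrite ffunE; case: (eqVneq C B) => [_|CB] //.
    apply: (implyP (forallP nL C)); apply: contra CnP => CP; by rewrite !inE CP CB.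
  + apply/andP; split.
    * rewrite (card_selD1 (G := fun C => val (L C) == 0) BP); last first.
        by move=> C /negbTE CB; rewrite ffunE CB.
      by rewrite (eqP c0) LB subn1.
    * apply/forallP => i; apply/implyP => i0.
      rewrite (card_selD1 (G := fun C => L C == i) BP); last first.
        by move=> C /negbTE CB; rewrite ffunE CB.
      have -> : (L B == i) = false by apply/negbTE; apply: contraTneq i0 => <-; rewrite (eqP LB).
      by rewrite subn0; exact: (implyP (forallP ci i) i0).
- case=> P L; rewrite !inE /= => H.
  case/and5P: H => /= pP sz cP nL /andP [c0 ci].
  have [pU BnP] := partU pP.
  rewrite eqxx ffunE eqxx /= andbT andbT.
  apply/and5P; split => /=.
  + exact: pU.
  + apply/forallP => C; apply/implyP => /setU1P [->|CP] //; exact: (implyP (forallP sz C) CP).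
  + rewrite cardsU1 BnP; apply/eqnP; move/eqnP: cP => /= cP.
    move: cP; set x := #|P|; move=> cP; lia.
  + apply/forallP => C; apply/implyP => CnP; rewrite ffunE; case: (eqVneq C B) => [_|CB] //.
    apply: (implyP (forallP nL C)); apply: contra CnP => CP; by rewrite !inE CP orbT.
  + apply/andP; split.
    * rewrite (card_selU1 (G := fun C => val (L C) == 0) BnP); last first.
        by move=> C /negbTE CB; rewrite ffunE CB.
      by rewrite ffunE eqxx (eqP c0).
    * apply/forallP => i; apply/implyP => i0.
      rewrite (card_selU1 (G := fun C => L C == i) BnP); last first.
        by move=> C /negbTE CB; rewrite ffunE CB.
      rewrite ffunE eqxx.
      have -> : (ord0 == i) = false by apply/negbTE; apply: contraTneq i0 => <-.
      exact: (implyP (forallP ci i) i0).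
- case=> P L; rewrite !inE /= => /andP [/andP [H BP] LB].
  case/and5P: H => /= pP sz cP nL _.
  rewrite /f0 /g0 /= setD1K //; congr pair; apply/ffunP => C; rewrite !ffunE.
  case: eqP => [->|] //; by apply: val_inj; apply/esym/eqP.
- case=> P L; rewrite !inE /= => H.
  case/and5P: H => /= pP sz cP nL _.
  have [pU BnP] := partU pP.
  rewrite /f0 /g0 /= setU1K //; congr pair; apply/ffunP => C; rewrite !ffunE.
  case: eqP => [->|] //; apply: val_inj; apply/esym/eqP; exact: (implyP (forallP nL B) BnP).
Qed.

End Removal.
Arguments card_selD1 {T B P F G}.
Arguments card_selU1 {T B P F G}.
Arguments partU {T A B} _ _ {P'}.

Lemma lift0 n (i : 'I_n.+1) (j : 'I_n) : 0 < i -> (val (lift i j) == 0) = (val j == 0).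
Proof.
move=> i0; rewrite /= /bump; case: (leqP i j) => h /=.
  by rewrite add1n; apply/eqP/eqP => //; lia.
by rewrite add0n.
Qed.

Lemma unlift_val n (i j : 'I_n.+2) : 0 < i -> j != i ->
  (val (odflt ord0 (unlift i j)) == 0) = (val j == 0).
Proof.
move=> i0; case: unliftP => [j' -> | <-] /=; first by rewrite lift0.
by rewrite eqxx.
Qed.

Lemma unlift_lift_eq n (i j : 'I_n.+2) (l : 'I_n.+1) : j != i ->
  (odflt ord0 (unlift i j) == l) = (j == lift i l).
Proof.
case: unliftP => [j' -> | <-] /=; first by rewrite (inj_eq (@lift_inj _ i)).
by rewrite eqxx.
Qed.

Lemma lift_unlift n (i j : 'I_n.+2) : j != i -> lift i (odflt ord0 (unlift i j)) = j.
Proof. by case: unliftP => [j' -> | <-] //=; rewrite eqxx. Qed.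

Section Removal2.
Variables (T : finType) (m : nat) (A B : {set T}).
Hypotheses (B0 : B != set0) (sBA : B \subset A) (Bm : #|B| <= m).

Lemma uniq_lab n (P : {set {set T}}) (L : {ffun {set T} -> 'I_n}) (i : 'I_n) :
  0 < i -> [forall C, (C \notin P) ==> (val (L C) == 0)] ->
  #|[set C in P | L C == i]| == 1 -> B \in P -> L B == i ->
  forall C, C != B -> L C != i.
Proof.
move=> i0 nL /cards1P [x Ex] BP LB.
have : B \in [set C in P | L C == i] by rewrite inE BP LB.
rewrite Ex inE => /eqP BX C CB; apply/negP => LCi.
case: (boolP (C \in P)) => CP.
  have : C \in [set C in P | L C == i] by rewrite inE CP LCi.
  by rewrite Ex inE -BX => /eqP CB'; move: CB; rewrite CB' eqxx.
have := implyP (forallP nL C) CP; rewrite (eqP LCi) => /eqP i00.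
by move: i0; rewrite i00.
Qed.

Arguments uniq_lab {n P L i}.

Lemma remi (k r : nat) (i : 'I_k.+2) : 0 < i ->
  #|[set PL | lp m k.+2 r A PL && (B \in PL.1) && (PL.2 B == i)]|
  = G m k.+1 r (A :\: B).
Proof.
move=> i0.
pose fi (PL : {set {set T}} * {ffun {set T} -> 'I_k.+2}) :=
  (PL.1 :\ B, [ffun C => odflt ord0 (unlift i (PL.2 C))]).
pose gi (PL : {set {set T}} * {ffun {set T} -> 'I_k.+1}) :=
  (B |: PL.1, [ffun C => if C == B then i else lift i (PL.2 C)]).
have iv : (val i == 0) = false by apply/negbTE; rewrite -lt0n.
apply: (@card_bij _ _ _ _ fi gi).
- case=> P L; rewrite !inE /= => /andP [/andP [H BP] LB].
  case/and5P: H => /= pP sz cP nL /andP [c0 ci].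
  have Lneq := uniq_lab i0 nL (implyP (forallP ci i) i0) BP LB.
  apply/and5P; split => /=.
  + exact: partitionD1.
  + apply/forallP => C; apply/implyP => /setD1P [_ CP]; exact: (implyP (forallP sz C) CP).
  + apply/eqnP; move: cP; rewrite (cardsD1 B P) BP /= => /eqnP cP.
    move: cP; set x := #|P :\ B|; move=> cP; lia.
  + apply/forallP => C; apply/implyP => CnP; rewrite ffunE; case: (eqVneq C B) => [CB|CB].
      by rewrite CB (eqP LB) unlift_none.
    rewrite unlift_val ?Lneq //.
    apply: (implyP (forallP nL C)); apply: contra CnP => CP; by rewrite !inE CP CB.
  + apply/andP; split.
    * rewrite (card_selD1 (G := fun C => val (L C) == 0) BP); last first.
        by move=> C CB; rewrite ffunE unlift_val ?Lneq.
      by rewrite (eqP c0) (eqP LB) iv subn0.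
    * apply/forallP => j; apply/implyP => j0.
      rewrite (card_selD1 (G := fun C => L C == lift i j) BP); last first.
        by move=> C CB; rewrite ffunE unlift_lift_eq ?Lneq.
      have -> : (L B == lift i j) = false by rewrite (eqP LB); apply/negbTE; exact: neq_lift.
      rewrite subn0; apply: (implyP (forallP ci _)).
      by rewrite lt0n lift0 // -lt0n.
- case=> P L; rewrite !inE /= => H.
  case/and5P: H => /= pP sz cP nL /andP [c0 ci].
  have [pU BnP] := partU B0 sBA pP.
  rewrite eqxx ffunE eqxx /= eqxx !andbT.
  apply/and5P; split => /=.
  + exact: pU.
  + apply/forallP => C; apply/implyP => /setU1P [->|CP] //; exact: (implyP (forallP sz C) CP).
  + rewrite cardsU1 BnP; apply/eqnP; move/eqnP: cP => /= cP.
    move: cP; set x := #|P|; move=> cP; lia.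
  + apply/forallP => C; apply/implyP => CnP; rewrite ffunE; case: (eqVneq C B) => [CB|CB].
      by move: CnP; rewrite CB !inE eqxx.
    rewrite lift0 //.
    apply: (implyP (forallP nL C)); apply: contra CnP => CP; by rewrite !inE CP orbT.
  + apply/andP; split.
    * rewrite (card_selU1 (G := fun C => val (L C) == 0) BnP); last first.
        by move=> C /negbTE CB; rewrite ffunE CB lift0.
      by rewrite ffunE eqxx iv (eqP c0).
    * apply/forallP => j; apply/implyP => j0.
      case: (unliftP i j) j0 => [j' -> | <-] j0.
        rewrite (card_selU1 (G := fun C => L C == j') BnP); last first.
          by move=> C /negbTE CB; rewrite ffunE CB (inj_eq (@lift_inj _ i)).
        rewrite ffunE eqxx.
        have -> : (i == lift i j') = false by apply/negbTE; exact: neq_lift.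
        apply: (implyP (forallP ci _)).
        by move: j0; rewrite !lt0n lift0.
      rewrite (card_selU1 (G := fun _ => false) BnP); last first.
        move=> C /negbTE CB; rewrite ffunE CB; apply/negbTE; rewrite eq_sym; exact: neq_lift.
      rewrite ffunE eqxx eqxx.
      have -> : [set C in P | false] = set0 by apply/setP => C; rewrite !inE andbF.
      by rewrite cards0.
- case=> P L; rewrite !inE /= => /andP [/andP [H BP] LB].
  case/and5P: H => /= pP sz cP nL /andP [c0 ci].
  have Lneq := uniq_lab i0 nL (implyP (forallP ci i) i0) BP LB.
  rewrite /fi /gi /= setD1K //; congr pair; apply/ffunP => C; rewrite !ffunE.
  case: (eqVneq C B) => [->|CB]; first by apply/esym/eqP.
  by rewrite lift_unlift ?Lneq.
- case=> P L; rewrite !inE /= => H.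
  case/and5P: H => /= pP sz cP nL _.
  have [pU BnP] := partU B0 sBA pP.
  rewrite /fi /gi /= setU1K //; congr pair; apply/ffunP => C; rewrite !ffunE.
  case: (eqVneq C B) => [->|CB].
    rewrite unlift_none /=; apply: val_inj; apply/esym/eqP; exact: (implyP (forallP nL B) BnP).
  by rewrite liftK.
Qed.

End Removal2.

Lemma card_sum_bool (T : finType) (p : pred T) : #|[set x | p x]| = \sum_x (p x : nat).
Proof.
rewrite -sum1_card big_mkcond /=; apply: eq_bigr => x _; rewrite inE; by case: (p x).
Qed.

Lemma count_w (T : finType) m k r (A : {set T}) (q : pred 'I_k) (w : {set T} -> nat) :
  \sum_(PL in [set PL | lp m k r A PL]) \sum_(C in PL.1 | q (PL.2 C)) w C
  = \sum_C w C * #|[set PL | lp m k r A PL && (C \in PL.1) && q (PL.2 C)]|.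
Proof.
under [RHS]eq_bigr do rewrite card_sum_bool big_distrr /=.
rewrite [RHS]exchange_big big_mkcond /=; apply: eq_bigr => PL _; rewrite inE.
case: (lp m k r A PL) => /=; last by rewrite big1 // => C _; rewrite /= muln0.
rewrite big_mkcond /=; apply: eq_bigr => C _.
case: (C \in PL.1) => //=; last by rewrite muln0.
by case: (q (PL.2 C)); rewrite ?muln1 ?muln0.
Qed.

Lemma S_zero (T : finType) m k r (A C : {set T}) (q : pred 'I_k) :
  ~~ ((C != set0) && (C \subset A) && (#|C| <= m)) ->
  #|[set PL | lp m k r A PL && (C \in PL.1) && q (PL.2 C)]| = 0.
Proof.
move=> hC; apply/eqP; rewrite cards_eq0; apply/eqP/setP => PL; rewrite !inE.
apply/negbTE; apply/negP => /andP [/andP [H CP] _]; case/and5P: H => pP sz _ _ _.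
by move: hC; rewrite (partition_neq0 pP CP) (partitionS pP CP) (implyP (forallP sz C) CP).
Qed.

Lemma count1 (T : finType) m k r (A : {set T}) : 0 < k -> 0 < r ->
  r * G m k r A = \sum_C (if (C != set0) && (C \subset A) && (#|C| <= m)
                          then G m k r.-1 (A :\: C) else 0).
Proof.
case: k => // k _; case: r => // r _.
have E : r.+1 * G m k.+1 r.+1 A =
   \sum_(PL in [set PL | lp m k.+1 r.+1 A PL])
      \sum_(C in PL.1 | (fun l : 'I_k.+1 => val l == 0) (PL.2 C)) 1.
  rewrite /G mulnC -sum_nat_const; apply: eq_bigr => PL; rewrite inE => H.
  rewrite sum1_card; case/and5P: H => _ _ _ _ /andP [/eqP c0 _].
  by rewrite -c0; apply: eq_card => C; rewrite !inE.
rewrite E (count_w _ m k.+1 r.+1 A (fun l : 'I_k.+1 => val l == 0) (fun=> 1)).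
apply: eq_bigr => C _; rewrite mul1n.
case: ifP => hC; last by rewrite (@S_zero _ m k.+1 r.+1 A C (fun l : 'I_k.+1 => val l == 0)) ?hC.
by case/andP: hC => /andP [C0 sCA] Cm; rewrite rem0.
Qed.

Lemma count2 (T : finType) m k r (A : {set T}) : 0 < k -> 0 < r ->
  #|A| * G m k r A = \sum_C (if (C != set0) && (C \subset A) && (#|C| <= m)
      then #|C| * (G m k r.-1 (A :\: C) + (k - 1) * G m k.-1 r (A :\: C)) else 0).
Proof.
case: k => // k _; case: r => // r _.
have E : #|A| * G m k.+1 r.+1 A =
   \sum_(i : 'I_k.+1) \sum_(PL in [set PL | lp m k.+1 r.+1 A PL])
      \sum_(C in PL.1 | (fun l => l == i) (PL.2 C)) #|C|.
  rewrite exchange_big /= /G mulnC -sum_nat_const; apply: eq_bigr => PL; rewrite inE => H.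
  case/and5P: H => pP _ _ _ _.
  rewrite (card_partition pP) (partition_big (fun C => PL.2 C) predT) //.
rewrite E.
under [LHS]eq_bigr => i _ do rewrite (count_w _ m k.+1 r.+1 A (fun l => l == i) (fun C => #|C|)).
rewrite exchange_big /=; apply: eq_bigr => C _.
rewrite -big_distrr /=.
case: ifP => hC; last first.
  by rewrite big1 ?muln0 // => i _; rewrite (@S_zero _ m k.+1 r.+1 A C (fun l => l == i)) ?hC.
case/andP: hC => /andP [C0 sCA] Cm; congr (_ * _).
rewrite big_ord_recl /=.
have -> : #|[set PL | lp m k.+1 r.+1 A PL && (C \in PL.1) && (PL.2 C == ord0)]|
        = #|[set PL | lp m k.+1 r.+1 A PL && (C \in PL.1) && (val (PL.2 C) == 0)]|.
  by apply: eq_card => PL; rewrite !inE.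
rewrite rem0 // subn1 /=; congr (_ + _).
clear E; case: k => [|k]; first by rewrite big_ord0.
rewrite (eq_bigr (fun _ => G m k.+1 r.+1 (A :\: C))) ?sum_nat_const ?card_ord //.
by move=> j _; rewrite remi.
Qed.

Lemma G_compl n m k r (C : {set 'I_n}) : G m k r (~: C) = Sle m (n - #|C|) k r.
Proof.
have -> : n - #|C| = #|~: C|.
  have h := cardsC C; rewrite card_ord in h; move: h; set a := #|C|; set b := #|~: C|; lia.
rewrite SleE (@G_transport _ _ _ (@enum_val_inj _ (mem (~: C))) m k r [set: _]).
congr G; apply/setP => x; apply/idP/imsetP => [xC|[y _ ->]]; last exact: enum_valP.
by exists (enum_rank_in xC x); rewrite ?inE ?enum_rankK_in.
Qed.

Lemma Sle_small m N k r : N < r + k - 1 -> Sle m N k r = 0.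
Proof.
move=> hN; rewrite SleE /G; apply/eqP; rewrite cards_eq0; apply/eqP/setP => PL.
rewrite !inE; apply/negbTE/negP => H; case/and5P: H => pP _ /eqP cP _ _.
have := card_partition pP; rewrite cardsT card_ord => EN.
have : #|PL.1| <= N.
  apply: (leq_trans _ (eq_leq (esym EN))).
  rewrite -sum1_card; apply: leq_sum => C CP; rewrite card_gt0; exact: (partition_neq0 pP CP).
move: cP hN; set x := #|PL.1|; move=> cP hN; lia.
Qed.

Lemma sum_card n (h : nat -> nat) :
  \sum_(C : {set 'I_n}) h #|C| = \sum_(j < n.+1) 'C(n, j) * h j.
Proof.
rewrite (partition_big (fun C : {set 'I_n} => (inord #|C| : 'I_n.+1)) predT) //=.
apply: eq_bigr => j _.
rewrite (eq_bigr (fun _ => h j)); last first.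
  move=> C /eqP <-; rewrite inordK // ltnS; rewrite -[X in _ <= X](card_ord n); exact: max_card.
rewrite sum_nat_const; congr (_ * _).
have E := card_draws 'I_n j; rewrite card_ord in E; rewrite -E; apply: eq_card => C; rewrite !inE.
have cC : #|C| < n.+1 by rewrite ltnS -[X in _ <= X](card_ord n) max_card.
by rewrite unfold_in /= inordK.
Qed.

Lemma range_sum (n U m : nat) (t : nat -> nat) : U <= n ->
  (forall j, U < j -> j <= n -> t j = 0) ->
  \sum_(j < n.+1) (if (0 < j) && (j <= m) then t j else 0)
  = \sum_(1 <= j < (minn m U).+1) t j.
Proof.
move=> Un tz.
rewrite -(big_mkord predT (fun j => if (0 < j) && (j <= m) then t j else 0)).
have hM : (minn m U).+1 <= n.+1 by rewrite ltnS geq_min Un orbT.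
rewrite (big_cat_nat (n := (minn m U).+1) (leq0n _) hM) /=.
rewrite [X in _ + X = _]big_nat_cond [X in _ + X = _]big1 ?addn0; last first.
  move=> j /andP [/andP [hj1 hj2] _]; case: ifP => // /andP [_ jm].
  apply: tz; last by rewrite -ltnS.
  lia.
rewrite big_ltn // /= add0n; apply: eq_big_nat => j /andP [j0 jM].
have -> : (0 < j) && (j <= m) by apply/andP; split; lia.
done.
Qed.

Theorem mainTheorem5 (n k m r : nat) :
  0 < n -> 0 < k -> 0 < m -> 0 < r ->
  r * Sle m n k r =
    \sum_(1 <= j < (minn m (n + 2 - k - r)).+1) 'C(n, j) * Sle m (n - j) k r.-1
  /\
  n * Sle m n k r =
    \sum_(1 <= j < (minn m (n + 2 - k - r)).+1)
       j * 'C(n, j) * (Sle m (n - j) k r.-1 + (k - 1) * Sle m (n - j) k.-1 r).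
Proof.
move=> n0 k0 m0 r0.
have Un : n + 2 - k - r <= n by lia.
have small : forall j, n + 2 - k - r < j -> j <= n ->
    Sle m (n - j) k r.-1 = 0 /\ Sle m (n - j) k.-1 r = 0.
  move=> j h1 h2; split; apply: Sle_small; lia.
split.
- rewrite SleE count1 //.
  pose h1 := fun j => if (0 < j) && (j <= m) then Sle m (n - j) k r.-1 else 0.
  rewrite (eq_bigr (fun C : {set 'I_n} => h1 #|C|)); last first.
    by move=> C _ /=; rewrite /h1 subsetT andbT card_gt0 setTD G_compl.
  rewrite (@sum_card n h1) /h1.
  rewrite (eq_bigr (fun j : 'I_n.+1 => if (0 < j) && (j <= m) then 'C(n, j) * Sle m (n - j) k r.-1 else 0)); last first.
    by move=> j _; case: ifP; rewrite ?muln0.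
  apply: (@range_sum n _ m (fun j => 'C(n, j) * Sle m (n - j) k r.-1)) => // j a1 a2.
  by rewrite (small j a1 a2).1 muln0.
- rewrite SleE -[X in X * _](card_ord n) -cardsT count2 //.
  pose h2 := fun j => if (0 < j) && (j <= m) then j * (Sle m (n - j) k r.-1 + (k - 1) * Sle m (n - j) k.-1 r) else 0.
  rewrite (eq_bigr (fun C : {set 'I_n} => h2 #|C|)); last first.
    by move=> C _ /=; rewrite /h2 subsetT andbT card_gt0 setTD !G_compl.
  rewrite (@sum_card n h2) /h2.
  rewrite (eq_bigr (fun j : 'I_n.+1 => if (0 < j) && (j <= m) then j * 'C(n, j) * (Sle m (n - j) k r.-1 + (k - 1) * Sle m (n - j) k.-1 r) else 0)); last first.
    by move=> j _; case: ifP; rewrite ?muln0 // mulnCA mulnA.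
  apply: (@range_sum n _ m (fun j => j * 'C(n, j) * (Sle m (n - j) k r.-1 + (k - 1) * Sle m (n - j) k.-1 r))) => // j a1 a2.
  by rewrite (small j a1 a2).1 (small j a1 a2).2 muln0 addn0 muln0.
Qed.
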